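(* Let $i_n^B$ and $i_n^D$ denote the numbers of involutions (elements $w$ with $w^2=e$) in $B_n$ and $D_n$ respectively. Then \[2i_n^D-i_n^B=\begin{cases}0 & n\text{ odd},\\ 2^{n/2}(n-1)!!=\dfrac{n!}{(n/2)!} & n\text{ even}.\end{cases}\] Therefore, for all positive integers $n$, $i_n^D\le i_n^B\le 2i_n^D$.
   Context: $B_n$ is the group of permutations $w$ of $\{\pm1,\dots,\pm n\}$ with $w(-i)=-w(i)$ for all $i$, and $D_n=\{w\in B_n:w(1)w(2)\cdots w(n)>0\}$. $(n-1)!!=(n-1)(n-3)\cdots1$ for $n$ even. *)

(* Defs.v *)
From mathcomp Require Import all_boot all_order all_algebra all_fingroup.
Set Implicit Arguments. Unset Strict Implicit. Unset Printing Implicit Defensive.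
Import GRing.Theory Num.Theory.

(* The set {+-1,...,+-n} is encoded as 'I_n * bool:
   (i, false) stands for i+1 and (i, true) stands for -(i+1). *)
Definition sgn_elt (n : nat) := ('I_n * bool)%type.

Definition negs n (x : sgn_elt n) : sgn_elt n := (x.1, ~~ x.2).

Definition zval n (x : sgn_elt n) : int :=
  (if x.2 then - (x.1.+1 : nat)%:Z else (x.1.+1 : nat)%:Z)%R.

Definition inB n (w : {perm sgn_elt n}) : bool :=
  [forall x, w (negs x) == negs (w x)].

Definition inD n (w : {perm sgn_elt n}) : bool :=
  inB w && (0 < \prod_(i < n) zval (w (i, false)))%R.

Definition involution n (w : {perm sgn_elt n}) : bool := (w * w == 1)%g.

Definition iB (n : nat) : nat := #|[set w : {perm sgn_elt n} | inB w && involution w]|.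
Definition iD (n : nat) : nat := #|[set w : {perm sgn_elt n} | inD w && involution w]|.

Fixpoint dfact (n : nat) : nat :=
  match n with
  | 0 => 1
  | 1 => 1
  | (k.+2) as m => m * dfact k
  end.

(* Main.v *)
Require Import Defs.
From mathcomp Require Import all_boot all_order all_algebra all_fingroup.
From mathcomp Require Import zify ring.
Set Implicit Arguments. Unset Strict Implicit. Unset Printing Implicit Defensive.
Import GRing.Theory Num.Theory.

Section Main.
Variable n : nat.
Notation T := (sgn_elt n).

Lemma tpE (x y z : T) : tperm x y z = if z == x then y else if z == y then x else z.
Proof. by rewrite permE. Qed.

Definition ty (a : 'I_n) (y : T) : {perm T} :=
  if y.1 == a then (if y.2 then tperm ((a,false) : T) (a,true) else 1%g)
  else (tperm ((a,false) : T) y * tperm ((a,true) : T) (negs y))%g.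

Lemma ty_a a y : ty a y (a,false) = y.
Proof.
rewrite /ty; case: y => b s /=; case: eqP => [->|nab].
  by case: s; rewrite ?perm1 // tpE eqxx.
rewrite permM !tpE eqxx /= !xpair_eqE /=.
have -> : (b == a) = false by apply/eqP.
by rewrite eqxx; case: s.
Qed.

Lemma tyB a y : inB (ty a y).
Proof. case: y => b s; apply/forallP => [[i c]]; 
rewrite /ty /negs /= ?in_set2 ?permM ?perm1 ?tpE /=.
case: (eqVneq b a) => [eab|nab].
  subst b; case: (eqVneq i a) => [eia|nia].
    by subst i; case: c; case: s; do 8!rewrite /= ?andbF ?andFb ?andbT ?andTb ?xpair_eqE /= ?eqxx ?perm1 ?permM ?tpE.
  by case: c; case: s; do 8!rewrite /= ?andbF ?andFb ?andbT ?andTb ?xpair_eqE /= ?eqxx ?(negbTE nia) ?perm1 ?permM ?tpE.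
have nba : a != b by rewrite eq_sym.
case: (eqVneq i a) => [eia|nia].
  by subst i; case: c; case: s; do 8!rewrite /= ?andbF ?andFb ?andbT ?andTb ?xpair_eqE /= ?eqxx ?(negbTE nba) ?(negbTE nab) ?permM ?tpE.
case: (eqVneq i b) => [eib|nib].
  by subst i; case: c; case: s; do 8!rewrite /= ?andbF ?andFb ?andbT ?andTb ?xpair_eqE /= ?eqxx ?(negbTE nba) ?(negbTE nab) ?(negbTE nia) ?permM ?tpE.
by case: c; case: s; do 8!rewrite /= ?andbF ?andFb ?andbT ?andTb ?xpair_eqE /= ?eqxx ?(negbTE nia) ?(negbTE nib) ?(negbTE nba) ?(negbTE nab) ?permM ?tpE.
Qed.

Lemma tyI a y : involution (ty a y).
Proof. case: y => b s; apply/eqP/permP => [[i c]]; 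
rewrite /ty /negs /= ?in_set2 ?permM ?perm1 ?tpE /=.
case: (eqVneq b a) => [eab|nab].
  subst b; case: (eqVneq i a) => [eia|nia].
    by subst i; case: c; case: s; do 8!rewrite /= ?andbF ?andFb ?andbT ?andTb ?xpair_eqE /= ?eqxx ?perm1 ?permM ?tpE.
  by case: c; case: s; do 8!rewrite /= ?andbF ?andFb ?andbT ?andTb ?xpair_eqE /= ?eqxx ?(negbTE nia) ?perm1 ?permM ?tpE.
have nba : a != b by rewrite eq_sym.
case: (eqVneq i a) => [eia|nia].
  by subst i; case: c; case: s; do 8!rewrite /= ?andbF ?andFb ?andbT ?andTb ?xpair_eqE /= ?eqxx ?(negbTE nba) ?(negbTE nab) ?permM ?tpE.
case: (eqVneq i b) => [eib|nib].
  by subst i; case: c; case: s; do 8!rewrite /= ?andbF ?andFb ?andbT ?andTb ?xpair_eqE /= ?eqxx ?(negbTE nba) ?(negbTE nab) ?(negbTE nia) ?permM ?tpE.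
by case: c; case: s; do 8!rewrite /= ?andbF ?andFb ?andbT ?andTb ?xpair_eqE /= ?eqxx ?(negbTE nia) ?(negbTE nib) ?(negbTE nba) ?(negbTE nab) ?permM ?tpE.
Qed.

Lemma tyS a y : [forall x : T, (x.1 \notin [set a; y.1]) ==> (ty a y x == x)].
Proof. case: y => b s; apply/forallP => [[i c]]; 
rewrite /ty /negs /= ?in_set2 ?permM ?perm1 ?tpE /=.
case: (eqVneq b a) => [eab|nab].
  subst b; case: (eqVneq i a) => [eia|nia].
    by subst i; case: c; case: s; do 8!rewrite /= ?andbF ?andFb ?andbT ?andTb ?xpair_eqE /= ?eqxx ?perm1 ?permM ?tpE.
  by case: c; case: s; do 8!rewrite /= ?andbF ?andFb ?andbT ?andTb ?xpair_eqE /= ?eqxx ?(negbTE nia) ?perm1 ?permM ?tpE.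
have nba : a != b by rewrite eq_sym.
case: (eqVneq i a) => [eia|nia].
  by subst i; case: c; case: s; do 8!rewrite /= ?andbF ?andFb ?andbT ?andTb ?xpair_eqE /= ?eqxx ?(negbTE nba) ?(negbTE nab) ?permM ?tpE.
case: (eqVneq i b) => [eib|nib].
  by subst i; case: c; case: s; do 8!rewrite /= ?andbF ?andFb ?andbT ?andTb ?xpair_eqE /= ?eqxx ?(negbTE nba) ?(negbTE nab) ?(negbTE nia) ?permM ?tpE.
by case: c; case: s; do 8!rewrite /= ?andbF ?andFb ?andbT ?andTb ?xpair_eqE /= ?eqxx ?(negbTE nia) ?(negbTE nib) ?(negbTE nba) ?(negbTE nab) ?permM ?tpE.
Qed.

Definition supp (C : {set 'I_n}) (w : {perm T}) :=
  [forall x : T, (x.1 \notin C) ==> (w x == x)].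
Definition SS C := [set w : {perm T} | [&& inB w, involution w & supp C w]].
Definition fac (w : {perm T}) (i : 'I_n) : int := if (w (i,false)).2 then (-1)%R else 1%R.
Definition eps w : int := (\prod_(i < n) fac w i)%R.
Definition g C : int := (\sum_(w in SS C) eps w)%R.

Lemma suppP (C : {set 'I_n}) (w : {perm T}) : reflect (forall x, x.1 \notin C -> w x = x) (supp C w).
Proof.
apply: (iffP forallP) => H x; first by move=> hx; exact/eqP/(implyP (H x)).
by apply/implyP => /H ->.
Qed.

Lemma inBP (w : {perm T}) : reflect (forall x, w (negs x) = negs (w x)) (inB w).
Proof. by apply: (iffP forallP) => H x; [exact/eqP/H | rewrite H]. Qed.

Lemma invP (w : {perm T}) : involution w -> forall x, w (w x) = x.
Proof. by move/eqP => H x; rewrite -permM H perm1. Qed.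

Lemma supp_block (C : {set 'I_n}) (w : {perm T}) (x : T) : supp C w -> ((w x).1 \in C) = (x.1 \in C).
Proof.
move/suppP => H; case: (boolP (x.1 \in C)) => xC; last by rewrite H // (negbTE xC).
apply/negPn/negP => nwx; have /perm_inj wx := H _ nwx.
by rewrite wx xC in nwx.
Qed.

Lemma eps_mul (C D : {set 'I_n}) (t w : {perm T}) :
  (forall i, i \in C -> i \notin D) -> supp C t -> supp D w ->
  eps (t * w)%g = (eps t * eps w)%R.
Proof.
move=> CD tC wD; rewrite /eps -big_split; apply: eq_bigr => i _ /=.
rewrite /fac permM; case: (boolP (i \in C)) => iC.
  have tiC : (t (i, false)).1 \in C by rewrite (supp_block _ tC).
  rewrite (suppP _ _ wD (t (i,false))) ?CD // (suppP _ _ wD (i,false)) ?CD //=.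
  by rewrite GRing.mulr1.
by rewrite (suppP _ _ tC (i,false)) //= GRing.mul1r.
Qed.

Lemma mul_SS (C D : {set 'I_n}) (t w : {perm T}) :
  (forall i, i \in C -> i \notin D) -> t \in SS C -> w \in SS D ->
  (t * w)%g \in SS (C :|: D).
Proof.
move=> CD; rewrite /SS !inE => /and3P [/inBP tB /invP tI tC] /and3P [/inBP wB /invP wI wD].
have comm : forall y, t (w y) = w (t y).
  move=> y; case: (boolP (y.1 \in C)) => yC.
    have tyC : (t y).1 \in C by rewrite (supp_block _ tC).
    by rewrite (suppP _ _ wD y) ?CD // (suppP _ _ wD (t y)) ?CD.
  rewrite (suppP _ _ tC y) //; apply: (suppP _ _ tC).
  apply/negP => wyC; have := suppP _ _ wD _ (CD _ wyC); rewrite wI => e.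
  by rewrite -e (negbTE yC) in wyC.
rewrite /SS. apply/and3P; split.
- by apply/inBP => x; rewrite !permM tB wB.
- by apply/eqP/permP => x; rewrite !permM perm1 comm tI wI.
apply/suppP => x; rewrite in_setU negb_or => /andP [xC xD].
by rewrite permM (suppP _ _ tC x) // (suppP _ _ wD x).
Qed.

Lemma class_eq (A C : {set 'I_n}) (t : {perm T}) : C \subset A -> t \in SS C ->
  [set w in SS A | [forall x, (x.1 \in C) ==> (w x == t x)]] = (mulg t) @: SS (A :\: C).
Proof.
move=> CA tS; have := tS; rewrite /SS inE => /and3P [/inBP tB tI' tC].
have tI := invP tI'.
have CD : forall i, i \in C -> i \notin A :\: C by move=> i iC; rewrite in_setD iC.
have AU : C :|: (A :\: C) = A.
  apply/setP => i; rewrite !inE; case: (boolP (i \in C)) => //= iC.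
  by rewrite (subsetP CA).
have tCC : forall x, ((t x).1 \in C) = (x.1 \in C) by move=> x; exact: supp_block.
apply/setP => w; apply/idP/idP.
- rewrite inE => /andP [wS /forallP agr].
  have {}agr : forall x, x.1 \in C -> w x = t x by move=> x xC; exact/eqP/(implyP (agr x)).
  move: (wS); rewrite /SS inE => /and3P [/inBP wB /invP wI wA].
  have wt : forall x, x.1 \in C -> w (t x) = x by move=> x xC; rewrite agr ?tCC // tI.
  apply/imsetP; exists (t * w)%g; last by rewrite mulgA (eqP tI') mul1g.
  rewrite /SS inE; apply/and3P; split.
  + by apply/inBP => x; rewrite !permM tB wB.
  + apply/eqP/permP => x; rewrite !permM perm1.
    case: (boolP (x.1 \in C)) => xC; first by rewrite !wt.
    rewrite (suppP _ _ tC x) //.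
    have wxC : (w x).1 \notin C.
      apply/negP => wxC; have e := agr _ wxC; rewrite wI in e.
      by have := tCC (w x); rewrite -e (negbTE xC) wxC.
    by rewrite (suppP _ _ tC (w x)) // wI.
  + apply/suppP => x; rewrite in_setD negb_and negbK permM.
    case: (boolP (x.1 \in C)) => //= xC; first by rewrite wt.
    by move=> xA; rewrite (suppP _ _ tC x) // (suppP _ _ wA x).
- case/imsetP => w' w'S ->; rewrite inE; apply/andP; split.
    by rewrite -AU; apply: mul_SS.
  apply/forallP => x; apply/implyP => xC; rewrite permM.
  move: w'S; rewrite /SS inE => /and3P [_ _ w'D].
  by rewrite (suppP _ _ w'D (t x)) // CD // tCC.
Qed.

Lemma agree (a : 'I_n) (y : T) (t w : {perm T}) : t \in SS [set a; y.1] ->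
  t (a,false) = y -> inB w -> involution w ->
  (w (a,false) == y) = [forall x, (x.1 \in [set a; y.1]) ==> (w x == t x)].
Proof.
move=> + ta /inBP wB /invP wI; rewrite /SS inE => /and3P [/inBP tB /invP tI _].
apply/idP/forallP => [/eqP wa [i c]|H]; last first.
  by have := H (a,false); rewrite in_set2 eqxx /= => /eqP ->; rewrite ta.
apply/implyP; rewrite in_set2 /= => /orP [/eqP ia | /eqP iy]; subst i.
- case: c; last by rewrite wa ta.
  have -> : ((a,true) : T) = negs (a,false) by [].
  by rewrite wB tB wa ta.
- have wy : w y = t y by rewrite -{1}wa wI -{1}ta tI.
  case: y wa ta wy => b s /= wa ta wy.
  case: (eqVneq c s) => [->|ncs]; first by rewrite wy.
  have -> : ((b,c) : T) = negs (b,s).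
    by rewrite /negs /=; congr pair; destruct c, s.
  by rewrite wB tB wy.
Qed.

Lemma tySS a y : ty a y \in SS [set a; y.1].
Proof. by rewrite /SS inE tyB tyI; exact: tyS. Qed.

Lemma fac_out C (t : {perm T}) i : supp C t -> i \notin C -> fac t i = 1%R.
Proof. by move=> tC iC; rewrite /fac (suppP _ _ tC (i,false)). Qed.

Lemma eps_ty a y : eps (ty a y) = if (y.1 == a) && y.2 then (-1)%R else 1%R.
Proof.
have tC := tyS a y; move/suppP: (tC) => tC'.
rewrite /eps (bigD1 a) //=.
case: y tC tC' => b s /= tC tC'.
case: (eqVneq b a) => [eba|nba].
  subst b; rewrite big1 ?GRing.mulr1; last first.
    by move=> i ia; apply: (fac_out tC); rewrite in_set2 orbb.
  by rewrite /fac ty_a /= ?eqxx; destruct s.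
rewrite (bigD1 b) //= big1 ?GRing.mulr1; last first.
  by move=> i /andP [ia ib]; apply: (fac_out tC); rewrite in_set2 negb_or ia ib.
rewrite /fac ty_a /= /ty /= (negbTE nba) permM !tpE /negs /=.
have nab : a != b by rewrite eq_sym.
by destruct s; do 4!rewrite /= ?xpair_eqE ?eqxx ?(negbTE nab) ?(negbTE nba) ?andbF ?andbT ?andFb ?andTb /=.
Qed.

Lemma Gy (A : {set 'I_n}) (a : 'I_n) (y : T) : a \in A ->
  (\sum_(w | (w \in SS A) && (w (a,false) == y)) eps w)%R =
  if y.1 \in A then (eps (ty a y) * g (A :\: [set a; y.1]))%R else 0%R.
Proof.
move=> aA; case: ifP => yA.
- have CA : [set a; y.1] \subset A.
    by apply/subsetP => i; rewrite in_set2 => /orP [/eqP -> | /eqP ->].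
  rewrite (eq_bigl (fun w => w \in [set w in SS A |
              [forall x, (x.1 \in [set a; y.1]) ==> (w x == ty a y x)]])); last first.
    move=> w; rewrite inE; case: (boolP (w \in SS A)) => //= wS.
    move: (wS); rewrite /SS inE => /and3P [wB wI _].
    exact: agree (tySS a y) (ty_a a y) wB wI.
  rewrite class_eq ?tySS // big_imset /=; last by move=> u v _ _; apply: mulgI.
  rewrite /g GRing.mulr_sumr; apply: eq_bigr => w wS.
  apply: (eps_mul (C:=[set a; y.1]) (D := A :\: [set a;y.1])).
  + by move=> i iC; rewrite in_setD iC.
  + exact: tyS.
  + by move: wS; rewrite /SS inE => /and3P [].
- rewrite big1 // => w /andP [wS /eqP wa].
  move: wS; rewrite /SS inE => /and3P [_ _ wA].
  by have := supp_block (a,false) wA; rewrite wa yA aA.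
Qed.

Lemma g_rec (A : {set 'I_n}) (a : 'I_n) : a \in A ->
  g A = (\sum_(b in A :\ a) (g (A :\: [set a; b]) *+ 2))%R.
Proof.
move=> aA; rewrite /g (partition_big (fun w : {perm T} => w (a,false) : T) xpredT) //=.
under eq_bigr => y _ do rewrite Gy //.
pose G (b : 'I_n) (s : bool) := if b \in A then (eps (ty a (b,s)) * g (A :\: [set a; b]))%R else 0%R.
have -> : (\sum_(y : T) (if y.1 \in A then eps (ty a y) * g (A :\: [set a; y.1]) else 0))%R
   = (\sum_(b : 'I_n) \sum_(s : bool) G b s)%R.
  by rewrite pair_big /=; apply: eq_bigr => [[b s]] _.
rewrite [RHS]big_mkcond /=; apply: eq_bigr => b _; rewrite big_bool /G !eps_ty /= in_setD1.
case: (eqVneq b a) => [->|nba] /=; first by rewrite aA ?eqxx GRing.mulN1r GRing.mul1r GRing.addNr.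
by case: (b \in A); rewrite ?GRing.mul1r ?GRing.addr0.
Qed.

Lemma SS0 : SS set0 = [set 1%g].
Proof.
apply/setP => w; rewrite /SS !inE; apply/idP/eqP.
- move=> /and3P [_ _ /suppP H]; apply/permP => x; rewrite perm1; apply: H.
  by rewrite inE.
- move=> ->; apply/and3P; split.
  + by apply/inBP => x; rewrite !perm1.
  + by rewrite /involution mulg1.
  + by apply/suppP => x _; rewrite perm1.
Qed.

Lemma g0 : g set0 = 1%R.
Proof. by rewrite /g SS0 big_set1 /eps big1 // => i _; rewrite /fac perm1. Qed.

Fixpoint F (m : nat) : nat :=
  match m with 0 => 1 | 1 => 0 | k.+2 => 2 * k.+1 * F k end.

Lemma gF (A : {set 'I_n}) : g A = Posz (F #|A|).
Proof.
move: {2}#|A| (leqnn #|A|) => k; elim: k A => [|k IH] A hA.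
  by move: hA; rewrite leqn0 => /eqP /cards0_eq ->; rewrite g0 cards0.
case: (set_0Vmem A) => [->|[a aA]]; first by rewrite g0 cards0.
have cA : #|A| = #|A :\ a|.+1 by rewrite (cardsD1 a A) aA.
rewrite (g_rec aA) (eq_bigr (fun _ => (Posz (F #|A :\ a|.-1) *+ 2)%R)); last first.
  move=> b; rewrite in_setD1 => /andP [ba bA].
  have cb : #|A :\: [set a; b]| = #|A :\ a|.-1.
    rewrite cardsD.
    have -> : A :&: [set a; b] = [set a; b].
      by apply/setIidPr/subsetP => i; rewrite in_set2 => /orP [/eqP -> | /eqP ->].
    by rewrite cards2 eq_sym ba cA subSS subn1.
  rewrite IH cb //; move: hA; rewrite cA; case: #|A :\ a| => // m; rewrite ltnS; apply: leq_trans; exact: leqnSn.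
rewrite sumr_const -GRing.mulrnA pmulrn mulrzz cA.
case: #|A :\ a| => [|m] //=; congr Posz.
by rewrite mulnC.
Qed.

Lemma eps_sign (w : {perm T}) : eps w = 1%R \/ eps w = (-1)%R.
Proof.
rewrite /eps; apply: (big_ind (fun x : int => x = 1%R \/ x = (-1)%R)); first by left.
  by move=> x y [->|->] [->|->]; rewrite ?GRing.mul1r ?GRing.mulN1r ?GRing.opprK; [left|right|right|left].
by move=> i _; rewrite /fac; case: ifP; [right|left].
Qed.

Lemma prod_zval (w : {perm T}) : (\prod_(i < n) zval (w (i,false)) =
   eps w * \prod_(i < n) Posz ((w (i,false)).1).+1)%R.
Proof.
rewrite /eps -big_split; apply: eq_bigr => i _; rewrite /zval /fac.
by case: (w (i,false)) => j c /=; case: c; rewrite ?GRing.mulN1r ?GRing.mul1r.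
Qed.

Lemma eps_inD (w : {perm T}) : inB w -> eps w = if inD w then 1%R else (-1)%R.
Proof.
move=> wB; rewrite /inD wB /= prod_zval pmulr_lgt0; last first.
  by apply: prodr_gt0 => i _.
by case: (eps_sign w) => ->.
Qed.

Lemma main1 : ((2 * iD n)%:Z - (iB n)%:Z = Posz (F n))%R.
Proof.
have := gF setT; rewrite cardsT card_ord => <-.
pose X := [set w : {perm T} | inD w && involution w].
pose Y := [set w : {perm T} | inB w && involution w].
have SY : SS setT = Y.
  apply/setP => w; rewrite /SS !inE; case: (inB w) => //=; case: (involution w) => //=.
  by apply/suppP => x; rewrite inE.
have YX : Y :&: X = X.
  by apply/setIidPr/subsetP => w; rewrite !inE => /andP [/andP [-> _] ->].
rewrite /g SY (big_setID X) YX /=.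
rewrite (eq_bigr (fun _ => 1%R)); last by move=> w; rewrite inE => /andP [wD _]; rewrite eps_inD ?wD //; case/andP: wD.
rewrite [Z in (_ = _ + Z)%R](eq_bigr (fun _ => (-1)%R)); last first.
  move=> w; rewrite !inE => /andP [nX /andP [wB wI]]; rewrite wI andbT in nX; by rewrite eps_inD // (negbTE nX).
rewrite !sumr_const cardsD YX /iD /iB -/X -/Y.
have : #|X| <= #|Y| by apply/subset_leq_card; rewrite -YX subsetIl.
move: #|X| #|Y| => x y h.
rewrite GRing.mulNrn (natrB _ h) !natz; lia.
Qed.

Lemma iD_le : iD n <= iB n.
Proof.
apply: subset_leq_card; apply/subsetP => w; rewrite !inE => /andP [/andP [-> _] ->] //.
Qed.
End Main.

Lemma dfactS m : dfact m.+1 = m.+1 * dfact m.-1.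
Proof. by case: m => [|j] //=; rewrite muln1. Qed.

Lemma F_closed m : F m = if odd m then 0 else 2 ^ m./2 * dfact m.-1.
Proof.
suff : F m = (if odd m then 0 else 2 ^ m./2 * dfact m.-1) /\
       F m.+1 = (if odd m.+1 then 0 else 2 ^ m.+1./2 * dfact m) by case.
elim: m => [|m [IH1 IH2]]; first by [].
split; first by [].
rewrite /= IH1 /=; case: (odd m) => //=; first by rewrite muln0.
case: m {IH1 IH2} => [|j] //=; rewrite expnS; set u := 2 ^ _; set v := dfact _.
by rewrite mulnCA !mulnA [2 * u]mulnC.
Qed.

Lemma fact_even m : (m.*2)`! = 2 ^ m * dfact (m.*2).-1 * m`!.
Proof.
elim: m => [|m IH] //.
rewrite doubleS !factS IH.
have -> : (m.*2.+2).-1 = (m.*2).+1 by [].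
rewrite dfactS expnS -!mul2n; set u := 2 ^ m; set v := dfact _; set w := m`!.
ring.
Qed.

Theorem lemma5p13 (n : nat) (hn : 0 < n) :
  ((2 * iD n)%:Z - (iB n)%:Z =
     if odd n then 0 else (2 ^ n./2 * dfact n.-1)%:Z)%R
  /\ (~~ odd n -> 2 ^ n./2 * dfact n.-1 = n`! %/ (n./2)`!)
  /\ (iD n <= iB n <= 2 * iD n).
Proof.
have m1 := main1 n; rewrite F_closed in m1.
split; first by rewrite m1; case: (odd n).
split.
  move=> ev; have e : n = (n./2).*2 by rewrite -[LHS]odd_double_half (negbTE ev).
  by rewrite {3}e fact_even -e mulnK // fact_gt0.
rewrite iD_le /=.
have : (0 <= (2 * iD n)%:Z - (iB n)%:Z)%R by rewrite m1.
rewrite subr_ge0 lez_nat; done.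
Qed.
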